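(* Let $k\ge1$. (1) An element $g=(g_1,g_2)$ of $B_k$ lies in $G_k'$ if and only if $g_1,g_2\in G_{k-1}$ and $g_1g_2\in B_{k-1}'$. (2) Every element of $G_k'$ is a single commutator: $G_k'=\{[f_1,f_2]\mid f_1,f_2\in G_k\}$.
   Context: Let $C_2=\{e,\sigma\}$ with $\sigma=(1,2)$. Define $B_1=C_2$ and $B_k=B_{k-1}\wr C_2$ for $k>1$, with elements written as wreath recursions $(g_1,g_2)\pi$, $g_1,g_2\in B_{k-1}$, $\pi\in C_2$, and multiplication $(g_1,g_2)\pi\cdot(h_1,h_2)\rho=(g_1h_{\pi(1)},g_2h_{\pi(2)})\pi\rho$; $(g_1,g_2)$ denotes an element with $\pi=e$. Define $G_1=\{e\}$ and, for $k>1$, $G_k=\{(g_1,g_2)\pi\in B_k : g_1g_2\in G_{k-1}\}$ (so $G_k\cong\mathrm{Syl}_2A_{2^k}$). The commutator is $[a,b]=aba^{-1}b^{-1}$. *)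

(* Defs.v *)
From HB Require Import structures.
From mathcomp Require Import all_boot all_fingroup all_solvable.
Set Implicit Arguments. Unset Strict Implicit. Unset Printing Implicit Defensive.
Local Open Scope group_scope.

(* The permutational wreath product  gT wr C2 = (gT x gT) x| C2,
   elements (g1, g2, p) stand for the wreath recursion (g1,g2)pi with
   pi = sigma iff p = true. *)
Definition wrC2 (gT : finGroupType) := (gT * gT * bool)%type.
HB.instance Definition _ (gT : finGroupType) := Finite.on (wrC2 gT).

Section WrC2.
Variable gT : finGroupType.
Implicit Types x y z : wrC2 gT.

(* (g1,g2)pi * (h1,h2)rho = (g1 h_{pi(1)}, g2 h_{pi(2)}) pi rho *)
Definition wr_mul x y : wrC2 gT :=
  let: (g1, g2, p) := x in let: (h1, h2, r) := y in
  if p then (g1 * h2, g2 * h1, ~~ r) else (g1 * h1, g2 * h2, r).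
Definition wr_one : wrC2 gT := (1, 1, false).
Definition wr_inv x : wrC2 gT :=
  let: (g1, g2, p) := x in
  if p then (g2^-1, g1^-1, true) else (g1^-1, g2^-1, false).

Lemma wr_mulA : associative wr_mul.
Proof.
by case=> [[a1 a2] []] [[b1 b2] []] [[c1 c2] []]; rewrite /wr_mul /= ?mulgA.
Qed.
Lemma wr_mul1 : left_id wr_one wr_mul.
Proof. by case=> [[a1 a2] []]; rewrite /wr_mul /= !mul1g. Qed.
Lemma wr_mulV : left_inverse wr_one wr_inv wr_mul.
Proof. by case=> [[a1 a2] []]; rewrite /wr_mul /= !mulVg. Qed.

HB.instance Definition _ := Finite_isGroup.Build (wrC2 gT) wr_mulA wr_mul1 wr_mulV.
End WrC2.

Definition trivG : Type := unit.
HB.instance Definition _ := Finite.on trivG.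
Lemma triv_mulA : associative (fun _ _ : trivG => tt). Proof. by []. Qed.
Lemma triv_mul1 : left_id (tt : trivG) (fun _ _ : trivG => tt). Proof. by case. Qed.
Lemma triv_mulV : left_inverse (tt : trivG) (fun _ : trivG => tt) (fun _ _ : trivG => tt).
Proof. by []. Qed.
HB.instance Definition _ := Finite_isGroup.Build trivG triv_mulA triv_mul1 triv_mulV.

(* B n is the paper's B_n: B 0 is the trivial group (convention, only used
   as the base of the recursion), B 1 = {e} wr C2 ~= C2, B (n+1) = B n wr C2. *)
Fixpoint B (n : nat) : finGroupType :=
  match n with 0 => trivG | n'.+1 => wrC2 (B n') end.

(* G n is the paper's G_n : G_1 = {e},
   G_{n+1} = {(g1,g2)pi | g1 g2 \in G_n} for n >= 1.
   (G 0 = B 0 is the trivial group, only a convention.) *)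
Fixpoint G (n : nat) : {set B n} :=
  match n return {set B n} with
  | 0 => [set: B 0]
  | n'.+1 => [set x : wrC2 (B n') |
               if n' is 0 then x == 1 else (x.1.1 * x.1.2 \in G n')]
  end.

(* The paper's commutator convention [a,b] = a b a^-1 b^-1. *)
Definition pcomm (gT : finGroupType) (a b : gT) : gT := a * b * a^-1 * b^-1.

(* Main.v *)
Require Import Defs.
From HB Require Import structures.
From mathcomp Require Import all_boot all_fingroup all_solvable.
Set Implicit Arguments. Unset Strict Implicit. Unset Printing Implicit Defensive.
Local Open Scope group_scope.

Section Ab.
Variable gT : finGroupType.
Let D : {group gT} := [~: [set: gT], [set: gT]]%G.
Lemma nDT (x : gT) : x \in 'N(D).
Proof. have nD : D <| [set: gT] := der_normal 1 _. by apply: (subsetP (normal_norm nD)); rewrite inE. Qed.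
Lemma phiM (x y : gT) : coset D (x * y) = coset D x * coset D y.
Proof. by rewrite morphM ?nDT. Qed.
Lemma phiV (x : gT) : coset D x^-1 = (coset D x)^-1.
Proof. by rewrite morphV ?nDT. Qed.
Lemma phiC (x y : gT) : coset D x * coset D y = coset D y * coset D x.
Proof.
rewrite -!phiM [x * y]commgC (phiM (y * x)) (@coset_id _ D [~ x, y]) ?mulg1 //.
by apply: mem_commg; rewrite inE.
Qed.
Lemma inD (x : gT) : (x \in D) = (coset D x == 1).
Proof. apply/idP/eqP; [exact: coset_id | exact: coset_idr (nDT x)]. Qed.
End Ab.
Section Wr.
Variable gT : finGroupType.
Let D : {group gT} := [~: [set: gT], [set: gT]]%G.
Implicit Types (a b : gT) (p q : bool).

Lemma wmulE a1 a2 p b1 b2 q :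
  ((a1, a2, p) : wrC2 gT) * (b1, b2, q) =
  if p then (a1 * b2, a2 * b1, ~~ q) else (a1 * b1, a2 * b2, q).
Proof. by []. Qed.
Lemma winvE a1 a2 p :
  ((a1, a2, p) : wrC2 gT)^-1 = if p then (a2^-1, a1^-1, true) else (a1^-1, a2^-1, false).
Proof. by []. Qed.
Lemma w1E : (1 : wrC2 gT) = (1, 1, false).
Proof. by []. Qed.

Definition chi (x : wrC2 gT) := coset D (x.1.1 * x.1.2).

Lemma chiM x y : chi (x * y) = chi x * chi y.
Proof.
case: x => [[a1 a2] p]; case: y => [[b1 b2] q]; rewrite /chi wmulE.
case: p => /=; rewrite !phiM.
- rewrite -!mulgA; congr (_ * _); rewrite !mulgA phiC -!mulgA; congr (_ * _).
  by rewrite phiC.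
- rewrite -!mulgA; congr (_ * _); rewrite !mulgA; congr (_ * _); exact: phiC.
Qed.

Lemma chi1 : chi 1 = 1.
Proof. by rewrite /chi /= mulg1 coset_id. Qed.

Lemma chiC x y : commute (chi x) (chi y).
Proof. exact: phiC. Qed.

Lemma chiR x y : chi [~ x, y] = 1.
Proof.
have chiV z : chi z^-1 = (chi z)^-1.
  by apply: (mulIg (chi z)); rewrite -chiM !mulVg chi1.
rewrite /commg /conjg !chiM !chiV.
by rewrite (chiC x y) mulKg mulVg.
Qed.

Definition A1 := [set x : wrC2 gT | ~~ x.2 && (chi x == 1)].

Lemma A1_group_set : group_set A1.
Proof.
apply/group_setP; split; first by rewrite inE chi1 eqxx.
move=> x y; rewrite !inE chiM => /andP[x2 /eqP ->] /andP[y2 /eqP ->].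
rewrite mulg1 eqxx andbT.
by case: x x2 => [[a1 a2] []] //= _; case: y y2 => [[b1 b2] []].
Qed.
Canonical A1_group := Group A1_group_set.

Lemma der_A1 : [~: [set: wrC2 gT], [set: wrC2 gT]] \subset A1.
Proof.
rewrite (gen_subG _ A1_group); apply/subsetP => _ /imset2P[x y _ _ ->].
rewrite inE chiR eqxx andbT.
by case: x => [[a1 a2] []]; case: y => [[b1 b2] []].
Qed.

Lemma inA1 a1 a2 : (((a1, a2, false) : wrC2 gT) \in A1) = (a1 * a2 \in D).
Proof. by rewrite inE /= inD. Qed.

End Wr.
Lemma CW m (z : B m) : z \in [~: [set: B m], [set: B m]] -> exists a b, z = pcomm a b.
Proof.
elim: m z => [|m IH] z.
  by move=> _; exists z, z; case: (pcomm z z); case: z.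
move=> /(subsetP (der_A1 (B m))).
case: z => [[g1 g2] []]; first by rewrite inE.
rewrite inA1 => Dg.
have : g2 * g1 \in [~: [set: B m], [set: B m]].
  by rewrite inD phiM phiC -phiM -inD.
case/IH => a [b Eg].
exists ((1, a, true) : wrC2 (B m)), ((b, g1 * b, false) : wrC2 (B m)).
rewrite /pcomm !wmulE /= mul1g invg1 mulg1 mulgK invMg !mulgA.
by rewrite -[a * b * a^-1 * b^-1]/(pcomm a b) -Eg mulgK.
Qed.
Fixpoint psi (m : nat) : B m -> bool :=
  match m return B m -> bool with
  | 0 => fun _ => false
  | m'.+1 => fun x : wrC2 (B m') =>
      [&& m' == 0 & x.2] (+) psi x.1.1 (+) psi x.1.2
  end.

Lemma psiM m (x y : B m) : psi (x * y) = psi x (+) psi y.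
Proof.
elim: m x y => [|m IH] //.
case=> [[a1 a2] p] [[b1 b2] q]; rewrite wmulE.
case: p => /=; rewrite !IH;
  by case: (m == 0); case: q; case: (psi a1); case: (psi a2); case: (psi b1); case: (psi b2).
Qed.

Lemma psi1 m : psi (1 : B m) = false.
Proof. by have := psiM (1 : B m) 1; rewrite mulg1 addbb. Qed.

Lemma psiV m (x : B m) : psi x^-1 = psi x.
Proof. by have := psiM x^-1 x; rewrite mulVg psi1; case: psi; case: psi. Qed.

Lemma G_psi m (x : B m) : (x \in G m) = ~~ psi x.
Proof.
elim: m x => [|m IH] x; first by rewrite inE.
rewrite /= inE; case: m IH x => [|m] IH.
  by case=> [[[] []] []].
by move=> x; rewrite IH psiM /=.
Qed.

Lemma psiS n (x : B n.+2) : psi x = psi (x.1.1 : B n.+1) (+) psi (x.1.2 : B n.+1).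
Proof. by []. Qed.

Lemma GS n (x : B n.+1) : 0 < n -> (x \in G n.+1) = (psi x.1.1 == psi x.1.2).
Proof.
rewrite G_psi; case: n x => // n x _; rewrite psiS.
by case: psi; case: psi.
Qed.
Lemma pcomm_fix m (a b : B m) : exists a' b', ~~ psi a' /\ pcomm a b = pcomm a' b'.
Proof.
case Ea: (psi a); last by exists a, b; rewrite Ea.
case Eb: (psi b).
  exists (a * b), b; rewrite psiM Ea Eb; split => //.
  by rewrite /pcomm invMg !mulgA mulgK.
exists b^-1, (b * a * b^-1); rewrite psiV Eb; split => //.
by rewrite /pcomm !invMg !invgK !mulgA mulVg mul1g mulgKV.
Qed.

Definition A2 n := [set x : wrC2 (B n) | ~~ psi x.1.1 && ~~ psi x.1.2].

Lemma A2_group_set n : group_set (A2 n).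
Proof.
apply/group_setP; split; first by rewrite inE /= psi1.
case=> [[a1 a2] p] [[b1 b2] q]; rewrite !inE wmulE /= => /andP[/negPf h1 /negPf h2] /andP[/negPf h3 /negPf h4].
by case: p; rewrite /= !psiM h1 h2 h3 h4.
Qed.
Canonical A2_group n := Group (A2_group_set n).

Lemma der_G_A2 n : 0 < n -> [~: G n.+1, G n.+1] \subset A2 n.
Proof.
move=> n0; rewrite (gen_subG _ (A2_group n)); apply/subsetP => _ /imset2P[x y Gx Gy ->].
move: Gx Gy; rewrite !GS //.
case: x => [[a1 a2] p]; case: y => [[b1 b2] q] /= /eqP Ex /eqP Ey.
rewrite inE /commg /conjg.
case: p; case: q; rewrite /= !psiM !psiV Ex Ey; by case: psi; case: psi.
Qed.
Lemma pcommE (gT : finGroupType) (x y : gT) : pcomm x y = [~ x^-1, y^-1].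
Proof. by rewrite /pcomm /commg /conjg !invgK !mulgA. Qed.

Lemma GV m (x : B m) : (x^-1 \in G m) = (x \in G m).
Proof. by rewrite !G_psi psiV. Qed.

Lemma pcomm_sub n :
  [set pcomm f1 f2 | f1 in G n.+1, f2 in G n.+1] \subset [~: G n.+1, G n.+1].
Proof.
apply/subsetP => _ /imset2P[x y Gx Gy ->].
by rewrite pcommE mem_commg ?GV.
Qed.

Lemma constr n (g1 g2 : B n) : 0 < n -> ~~ psi g1 -> ~~ psi g2 ->
  g1 * g2 \in [~: [set: B n], [set: B n]] ->
  ((g1, g2, false) : B n.+1) \in [set pcomm f1 f2 | f1 in G n.+1, f2 in G n.+1].
Proof.
move=> n0 p1 p2 Dg.
have : g2 * g1 \in [~: [set: B n], [set: B n]].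
  by rewrite inD phiM phiC -phiM -inD.
case/CW => a0 [b0 Eg0].
have [a [b [pa Eg]]] := pcomm_fix a0 b0.
rewrite {}Eg in Eg0.
apply/imset2P; exists ((1, a, true) : wrC2 (B n)) ((b, g1 * b, false) : wrC2 (B n)).
- by rewrite GS //= psi1 (negPf pa).
- by rewrite GS //= psiM (negPf p1).
rewrite /pcomm !wmulE /= mul1g invg1 mulg1 mulgK invMg !mulgA.
by rewrite -[a * b * a^-1 * b^-1]/(pcomm a b) -Eg0 mulgK.
Qed.

Theorem mainTheorem16 (n : nat) :
  (forall g1 g2 : B n,
     ((g1, g2, false) : B n.+1) \in [~: G n.+1, G n.+1] <->
     [/\ g1 \in G n, g2 \in G n & g1 * g2 \in [~: [set: B n], [set: B n]]])
  /\
  [~: G n.+1, G n.+1] = [set pcomm f1 f2 | f1 in G n.+1, f2 in G n.+1].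
Proof.
case: n => [|m].
  have G1 : G 1 = [1 (B 1)].
    by apply/setP => x; rewrite /= !inE.
  split.
    move=> g1 g2; case: g1; case: g2; split=> _; last exact: group1.
    by split; rewrite ?inE //; exact: group1.
  rewrite G1 comm1G; apply/setP => x; rewrite inE.
  apply/eqP/imset2P => [->|[f1 f2]]; last by rewrite !inE => /eqP-> /eqP-> ->.
  by exists 1 1; rewrite ?inE //.
set n := m.+1; have n0 : 0 < n by [].
have sub : [~: G n.+1, G n.+1] \subset A1 (B n) :&: A2 n.
  rewrite subsetI der_G_A2 // andbT; apply: subset_trans (der_A1 _).
  by apply: commgSS; apply/subsetP => x; rewrite inE.
have toC (g1 g2 : B n) : ((g1, g2, false) : B n.+1) \in [~: G n.+1, G n.+1] ->
   [/\ ~~ psi g1, ~~ psi g2 & g1 * g2 \in [~: [set: B n], [set: B n]]].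
  move/(subsetP sub); rewrite inE inA1 inE /= => /andP[Dg /andP[p1 p2]].
  by split.
split.
  move=> g1 g2; split.
    by case/toC => p1 p2 Dg; rewrite !G_psi.
  case; rewrite !G_psi => p1 p2 Dg.
  exact: (subsetP (pcomm_sub n)) (constr n0 p1 p2 Dg).
apply/eqP; rewrite eqEsubset pcomm_sub andbT.
apply/subsetP => x xD; move: (xD) => /(subsetP sub); rewrite inE => /andP[].
case: x xD => [[g1 g2] []]; first by rewrite inE.
by case/toC => p1 p2 Dg _ _; exact: constr.
Qed.
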